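(* A class $\mathcal V$ of Stone topological $\Omega$-algebras is a Stone variety if and only if there is a class $\Sigma$ of Stone pseudoidentities over Stonean spaces such that $\mathcal V$ is exactly the class of all Stone topological $\Omega$-algebras satisfying every member of $\Sigma$.
   Context: $\Omega=\biguplus_n\Omega_n$ is a fixed topological signature; a Stone topological $\Omega$-algebra is a compact Hausdorff 0-dimensional space $A$ with continuous evaluation maps $\Omega_n\times A^n\to A$. A Stone variety is a nonempty class of Stone topological algebras closed under images by onto continuous homomorphisms that are Stone topological algebras, closed subalgebras, and arbitrary direct products. A Stonean space is a compact Hausdorff extremally disconnected space (closure of every open set is open). For a topological space $X$, $\overline{\Omega}_X\mathcal{S}t_\Omega$ is the free Stone topological algebra over $X$: a Stone topological algebra with a continuous map $\iota$ from $X$ whose image generates a dense subalgebra, such that every continuous $\varphi:X\to S$ into a Stone topological algebra factors uniquely as $\hat\varphi\circ\iota$ with $\hat\varphi$ a continuous homomorphism. A Stone pseudoidentity over $X$ is a pair $(u,v)$ of elements of $\overline{\Omega}_X\mathcal{S}t_\Omega$, written $u=v$; a Stone topological algebra $S$ satisfies it if $\hat\varphi(u)=\hat\varphi(v)$ for every continuous map $\varphi:X\to S$. A Stone pseudoidentity over a Stonean space is one over some Stonean space $X$; $\Sigma$ may be a proper class and may involve different spaces $X$. *)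

(* Defs.v *)
From HB Require Import structures.
From mathcomp Require Import all_boot all_order all_algebra.
From mathcomp Require Import all_classical all_reals all_analysis.

Set Implicit Arguments.
Unset Strict Implicit.
Unset Printing Implicit Defensive.

Local Open Scope classical_set_scope.

(* A topological signature: Omega = disjoint union of the spaces Omega_n,
   Omega_n being the topological space of n-ary operation symbols. *)
Definition tsig := nat -> topologicalType.

Record topAlg (Om : tsig) := TopAlg {
  carrier :> topologicalType;
  op : forall n : nat, Om n -> ('I_n -> carrier) -> carrier
}.
Arguments op {Om} A n w a : rename.

Definition pow_space (T : topologicalType) (n : nat) : topologicalType :=
  prod_topology (fun _ : 'I_n => T).

Definition zero_dim (T : topologicalType) : Prop :=
  forall (U : set T) (x : T), open U -> U x ->
    exists V : set T, [/\ clopen V, V x & V `<=` U].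

Definition stone_space (T : topologicalType) : Prop :=
  [/\ compact [set: T], hausdorff_space T & zero_dim T].

Definition stonean_space (T : topologicalType) : Prop :=
  [/\ compact [set: T], hausdorff_space T &
      forall U : set T, open U -> open (closure U)].

Definition is_stone (Om : tsig) (A : topAlg Om) : Prop :=
  stone_space A /\
  forall n : nat,
    continuous (fun p : (Om n * pow_space A n)%type => op A n p.1 p.2).

Definition is_hom (Om : tsig) (A B : topAlg Om) (f : A -> B) : Prop :=
  forall (n : nat) (w : Om n) (a : 'I_n -> A), f (op A n w a) = op B n w (f \o a).

Definition op_closed (Om : tsig) (A : topAlg Om) (S : set A) : Prop :=
  forall (n : nat) (w : Om n) (a : 'I_n -> A), (forall i, S (a i)) -> S (op A n w a).

(* The subalgebra carried by an op-closed subset, with the subspace topology. *)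
Definition subAlg (Om : tsig) (A : topAlg Om) (S : set A) (HS : op_closed S)
  : topAlg Om :=
  @TopAlg Om (set_type S)
    (fun n w a => SigSub (mem_set (HS n w (fun i => set_val (a i))
                     (fun i => set_valP (a i))))).

Definition prodAlg (Om : tsig) (I : Type) (A : I -> topAlg Om) : topAlg Om :=
  @TopAlg Om (prod_topology (fun i => A i))
    (fun n w a => fun i => op (A i) n w (fun k => a k i)).

Definition stone_variety (Om : tsig) (V : topAlg Om -> Prop) : Prop :=
  [/\ (forall A, V A -> is_stone A),
      (exists A, V A),
      (forall (A B : topAlg Om) (f : A -> B),
          V A -> is_stone B -> continuous f -> is_hom f -> (forall b : B, exists a : A, f a = b) -> V B),
      (forall (A : topAlg Om) (S : set A) (HS : op_closed S),
          V A -> closed S -> V (subAlg HS)) &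
      (forall (I : Type) (A : I -> topAlg Om),
          (forall i, V (A i)) -> V (prodAlg A))].

Definition gen_sub (Om : tsig) (A : topAlg Om) (G : set A) : set A :=
  \bigcap_(S in [set S : set A | op_closed S /\ G `<=` S]) S.

Definition is_free_stone (Om : tsig) (X : topologicalType) (F : topAlg Om)
  (iota : X -> F) : Prop :=
  [/\ is_stone F, continuous iota,
      closure (gen_sub (range iota)) = [set: F] &
      forall (S : topAlg Om) (phi : X -> S), is_stone S -> continuous phi ->
        exists! h : F -> S, [/\ continuous h, is_hom h & h \o iota = phi]].

Record stonean_pseudoid (Om : tsig) := StoneanPseudoid {
  pi_space : topologicalType;
  pi_space_stonean : stonean_space pi_space;
  pi_free : topAlg Om;
  pi_iota : pi_space -> pi_free;
  pi_freeP : is_free_stone pi_iota;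
  pi_lhs : pi_free;
  pi_rhs : pi_free
}.

(* S satisfies u = v: hat(phi) u = hat(phi) v for every continuous phi : X -> S,
   hat(phi) being the continuous homomorphism with hat(phi) \o iota = phi. *)
Definition satisfies (Om : tsig) (S : topAlg Om) (e : stonean_pseudoid Om)
  : Prop :=
  forall phi : pi_space e -> S, continuous phi ->
    forall h : pi_free e -> S, continuous h -> is_hom h ->
      h \o @pi_iota Om e = phi -> h (@pi_lhs Om e) = h (@pi_rhs Om e).

(* Main.v *)
Require Import Defs.
From HB Require Import structures.
From mathcomp Require Import all_boot all_order all_algebra.
From mathcomp Require Import all_classical all_reals all_analysis.


Module Helpers.
Set Implicit Arguments.
Unset Strict Implicit.
Unset Printing Implicit Defensive.
Local Open Scope classical_set_scope.

Lemma cont_into_prod (X : topologicalType) (I : Type) (K : I -> topologicalType)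
  (f : X -> prod_topology K) :
  (forall i, continuous (fun x => f x i)) -> continuous f.
Proof.
move=> cf x; apply/cvg_sup => i.
have := @continuous_comp_initial (prod_topology K) X (K i) (fun g => g i) f.
by move=> /(_ (cf i)); apply.
Qed.

Lemma proj_cont (I : Type) (K : I -> topologicalType) (i : I) :
  continuous (fun f : prod_topology K => f i).
Proof. exact: (@proj_continuous {classic I} K i). Qed.

Section InitialLemmas.
Variables (S : choiceType) (Z : topologicalType) (f : S -> Z).
Local Notation W := (initial_topology f).

Lemma initial_nbhsP (w : W) (B : set W) :
  nbhs w B <-> exists Op : set Z, [/\ open Op, Op (f w) & f @^-1` Op `<=` B].
Proof.
split.
  rewrite nbhsE => -[U [oU Uw] UB]; case: oU => Op oO OU.
  by subst U; exists Op; split.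
move=> [Op [oO Ow OB]]; apply: (filterS OB); apply: open_nbhs_nbhs.
by split => //; exists Op.
Qed.

Lemma initial_compact : compact (range f) -> compact [set: W].
Proof.
move=> cZ F PF _.
have PF' : ProperFilter (f @ F) by exact: fmap_proper_filter.
have Fr : F (f @^-1` range f).
  by apply: filterS (@filterT _ F _) => x _; exists x.
have [z [[w _ <-] clz]] := cZ (f @ F) PF' Fr.
exists w; split => // A B FA /initial_nbhsP [Op [oO Ow OB]].
have fA : (f @ F) (f @` A).
  by rewrite /fmap /=; apply: filterS FA => a Aa; exists a.
have := clz _ Op fA (open_nbhs_nbhs (conj oO Ow)).
by move=> [_ [[a Aa <-] Oa]]; exists a; split => //; apply: OB.
Qed.

Lemma initial_hausdorff : injective f -> hausdorff_space Z -> hausdorff_space W.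
Proof.
move=> fi; rewrite !open_hausdorff => hZ x y xy.
have /hZ [[U V] /= [xU yV] [oU oV /eqP UV]] : f x != f y.
  by apply: contra_neq xy => /fi.
exists (f @^-1` U, f @^-1` V) => /=.
  by rewrite !inE; move: xU yV; rewrite !inE.
split; [by exists U| by exists V|].
by apply/eqP; rewrite -preimage_setI UV preimage_set0.
Qed.

Lemma initial_zero_dimensional : injective f -> zero_dimensional Z ->
  zero_dimensional W.
Proof.
move=> fi zZ x y xy.
have /zZ [U [cU Ux Uy]] : f x != f y by apply: contra_neq xy => /fi.
exists (f @^-1` U); split => //; apply: preimage_clopen cU _.
exact: initial_continuous.
Qed.

End InitialLemmas.

Lemma stone_alt (T : topologicalType) : stone_space T <->
  [/\ compact [set: T], hausdorff_space T & zero_dimensional T].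
Proof.
split.
  move=> [cT hT zT]; split => // x y xy.
  have [U [oU Ux nUy]] : exists U, [/\ open U, U x & ~ U y].
    move: (hausdorff_accessible hT xy) => [U [oU Ux Uy]].
    by exists U; split => //; [move: Ux; rewrite inE | move: Uy; rewrite inE].
  have [V [cV Vx VU]] := zT U x oU Ux.
  by exists V; split => // /VU.
move=> [cT hT zT]; split => // U x oU Ux.
have := @zero_dimensional_cvg T x hT zT cT U.
move=> /(_ (open_nbhs_nbhs (conj oU Ux))) [V [Vx cV] VU].
by exists V; split.
Qed.

Lemma pow_map_cont (A B : topologicalType) (g : A -> B) n :
  continuous g -> continuous (fun a : pow_space A n => (g \o a : pow_space B n)).
Proof.
move=> cg; apply: cont_into_prod => k x.
apply: (@continuous_comp _ _ _ (fun a : pow_space A n => a k) g).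
  exact: proj_cont.
exact: cg.
Qed.

Lemma pair_map_cont (X Y Y' : topologicalType) (h : Y -> Y') :
  continuous h -> continuous (fun p : X * Y => (p.1, h p.2)).
Proof.
move=> ch p; apply: cvg_pair; first exact: cvg_fst.
apply: (@continuous_comp _ _ _ snd h); last exact: ch.
exact: cvg_snd.
Qed.

Definition opc (Om : tsig) (A : topAlg Om) n : Om n * pow_space A n -> A :=
  fun p => op A n p.1 p.2.
Arguments opc {Om} A n.

Lemma prodAlg_op_cont (Om : tsig) (I : Type) (A : I -> topAlg Om) n :
  (forall i, continuous (opc (A i) n)) ->
  continuous (opc (prodAlg A) n).
Proof.
move=> cA; apply: cont_into_prod => i x.
have -> : (fun p : Om n * pow_space (prodAlg A) n => opc (prodAlg A) n p i) =
  (opc (A i) n) \o (fun p => (p.1, (fun f : prod_topology A => f i) \o p.2)).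
  by [].
apply: continuous_comp; last exact: cA.
apply: pair_map_cont; apply: pow_map_cont; exact: proj_cont.
Qed.

Lemma prod_stone (I : Type) (K : I -> topologicalType) :
  (forall i, stone_space (K i)) -> stone_space (prod_topology K).
Proof.
move=> sK; apply/stone_alt; split.
- have cK i : compact [set: K i] by case: (sK i).
  have := @tychonoff {classic I} K (fun _ => setT) cK.
  by congr compact; rewrite predeqE.
- by apply: (@hausdorff_product {classic I}) => i; case: (sK i).
- by apply: (@zero_dimension_prod {classic I}) => i; have [] := stone_alt (K i) ; move=> /(_ (sK i)) [].
Qed.

Lemma prodAlg_stone (Om : tsig) (I : Type) (A : I -> topAlg Om) :
  (forall i, is_stone (A i)) -> is_stone (prodAlg A).
Proof.
move=> sA; split.
  by apply: prod_stone => i; case: (sA i).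
move=> n; apply: prodAlg_op_cont => i; exact: (sA i).2.
Qed.

Lemma subAlg_stone (Om : tsig) (A : topAlg Om) (S : set A) (HS : op_closed S) :
  is_stone A -> closed S -> is_stone (subAlg HS).
Proof.
move=> [sA cA] cS; split.
  have [cpA hA zA] := (stone_alt A).1 sA.
  apply/stone_alt; split.
  - apply: (@initial_compact _ A (@set_val A S)).
    have -> : range (@set_val A S) = S.
      rewrite predeqE => x; split; first by move=> [y _ <-]; exact: set_valP.
      by move=> Sx; exists (SigSub (mem_set Sx)).
    exact: subclosed_compact cS cpA _.
  - by apply: (@initial_hausdorff _ A (@set_val A S)) => //; exact: val_inj.
  - by apply: (@initial_zero_dimensional _ A (@set_val A S)) => //; exact: val_inj.
move=> n.
apply: (@continuous_comp_initial _ _ A (@set_val A S)).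
have -> : (@set_val A S) \o (opc (subAlg HS) n) =
  (opc A n) \o (fun p => (p.1, (@set_val A S) \o p.2)) by [].
move=> x; apply: continuous_comp; last exact: cA.
apply: pair_map_cont; apply: pow_map_cont.
exact: initial_continuous.
Qed.

Lemma closed_eq (T B : topologicalType) (g1 g2 : T -> B) :
  hausdorff_space B -> continuous g1 -> continuous g2 ->
  closed [set z | g1 z = g2 z].
Proof.
move=> hB c1 c2 z clz; apply: hB => U V nU nV.
have N : nbhs z (g1 @^-1` U `&` g2 @^-1` V).
  by apply: filterI; [exact: c1 | exact: c2].
have [w [/= E [Uw Vw]]] := clz _ N.
by exists (g1 w); split => //; rewrite E.
Qed.

Lemma fst_cont (X Y : topologicalType) : continuous (@fst X Y).
Proof. by move=> p; exact: cvg_fst. Qed.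

Lemma snd_cont (X Y : topologicalType) : continuous (@snd X Y).
Proof. by move=> p; exact: cvg_snd. Qed.

Lemma pair_cst_cont (X Y : topologicalType) (x : X) :
  continuous (fun y : Y => (x, y)).
Proof. move=> y; apply: cvg_pair; [exact: cvg_cst | exact: cvg_id]. Qed.

Lemma fst_closed (X Y : topologicalType) (K : set (X * Y)) :
  compact [set: X] -> compact [set: Y] -> hausdorff_space X -> closed K ->
  closed (fst @` K).
Proof.
move=> cX cY hX cK; apply: compact_closed => //.
apply: continuous_compact; first exact/continuous_subspaceT/fst_cont.
apply: subclosed_compact cK _ (@subsetT _ K).
by rewrite -setXTT; exact: compact_setX.
Qed.

Lemma preimage_closed' (S T : topologicalType) (g : S -> T) (C : set T) :
  continuous g -> closed C -> closed (g @^-1` C).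
Proof. by move=> cg; move: C; apply/continuous_closedP. Qed.

Section Gleason.
Variables (X A B : topologicalType) (f : A -> B) (phi : X -> B).
Hypotheses (sX : stonean_space X) (cA : compact [set: A])
  (hA : hausdorff_space A) (hB : hausdorff_space B) (cf : continuous f)
  (sf : forall b, exists a, f a = b) (cphi : continuous phi).

Let cX : compact [set: X]. Proof. by case: sX. Qed.
Let hX : hausdorff_space X. Proof. by case: sX. Qed.
Let eX : forall U : set X, open U -> open (closure U). Proof. by case: sX. Qed.

Let P := [set p : X * A | phi p.1 = f p.2].
Let cP : closed P.
Proof.
apply: (@closed_eq _ B (fun p : X * A => phi p.1) (fun p => f p.2)) => // p.
  by apply: (@continuous_comp _ _ _ fst phi); [exact: fst_cont | exact: cphi].
by apply: (@continuous_comp _ _ _ snd f); [exact: snd_cont | exact: cf].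
Qed.

Let good (M : set (X * A)) := closed M /\ forall x, exists a, M (x, a) /\ P (x, a).

Let chain_good (F : set (set (X * A))) :
  F `<=` (fun U => good (~` U)) -> total_on F subset ->
  good (~` \bigcup_(U in F) U).
Proof.
move=> FP tF; split.
  rewrite setC_bigcup; apply: closed_bigI => U /FP []//.
move=> x.
pose S (U : set (X * A)) := [set a | ~ U (x, a) /\ P (x, a)].
pose D := F `|` [set set0].
have Dne : exists U, D U by exists set0; right.
have Ddir : forall U V, D U -> D V -> exists2 W, D W & S W `<=` S U `&` S V.
  move=> U V DU DV.
  have [UV|VU] : U `<=` V \/ V `<=` U.
    case: DU => [FU|->]; last by left.
    case: DV => [FV|->]; last by right.
    exact: tF.
  - exists V => // a [nV Pa]; split; split => //.
    by move=> /UV.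
  - exists U => // a [nU Pa]; split; split => //.
    by move=> /VU.
have FF := filter_from_filter Dne Ddir.
have PF : ProperFilter (filter_from D S).
  apply: filter_from_proper => U [FU|->].
    by have [_ /(_ x) [a [nU Pa]]] := FP U FU; exists a.
  by have [a fa] := sf (phi x); exists a; split.
have [a [_ cla]] := cA PF (filterS (@subsetT _ _) (@filterT _ _ FF)).
have SU : forall U, D U -> S U a.
  move=> U DU.
  have cS : closed (S U).
    have -> : S U = (fun a : A => (x, a)) @^-1` (~` U `&` P) by [].
    apply: preimage_closed'; first exact: pair_cst_cont.
    apply: closedI => //.
    case: DU => [/FP []//|->]; rewrite setC0; exact: closedT.
  apply: cS => N nN.
  have [b [Sb Nb]] := cla (S U) N (ex_intro2 _ _ U DU (fun _ h => h)) nN.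
  by exists b.
exists a; split; last by case: (SU set0 (or_intror erefl)).
by move=> [U FU Ua]; case: (SU U (or_introl FU)).
Qed.

Let exM : exists M, [/\ good M, M `<=` P &
  forall M', good M' -> M' `<=` M -> M' = M].
Proof.
have [U0 [gU0 maxU0]] := @Zorn_bigcup (X * A) (fun U => good (~` U)) chain_good.
have minM : forall M', good M' -> M' `<=` ~` U0 -> M' = ~` U0.
  move=> M' gM' sM'; apply: contrapT => neM.
  apply: (maxU0 (~` M')); last by rewrite setCK.
  split; first by move=> p /[swap] /sM'.
  move=> E; apply: neM; apply/seteqP; split => // p Up.
  by apply: contrapT => nM; exact: Up (E _ nM).
exists (~` U0); split => //.
have gI : good (~` U0 `&` P).
  split; first by apply: closedI => //; case: gU0.
  by move=> x; have [a [Ma Pa]] := gU0.2 x; exists a.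
by rewrite -(minM _ gI (@subIsetl _ _ _)) => p [].
Qed.

Lemma gleason_lift : exists psi : X -> A, continuous psi /\ f \o psi = phi.
Proof.
have [M [gM MP minM]] := exM.
have cM : closed M by case: gM.
pose OG (G : set A) := ~` (fst @` (M `&` [set p | ~ G p.2])).
have oOG : forall G, open G -> open (OG G).
  move=> G oG; rewrite /OG openC; apply: fst_closed => //.
  apply: closedI => //.
  have -> : [set p : X * A | ~ G p.2] = snd @^-1` (~` G) by [].
  by apply: preimage_closed'; [exact: snd_cont | exact: open_closedC].
have i1 : forall G x b, OG G x -> M (x, b) -> G b.
  move=> G x b Ox Mb; apply: contrapT => nG; apply: Ox.
  by exists (x, b).
have i2 : forall G x a, open G -> M (x, a) -> G a -> closure (OG G) x.
  move=> G x a oG Ma Ga N; rewrite nbhsE => -[N' [oN' N'x] N'N].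
  pose M' := M `&` [set p : X * A | ~ (N' p.1 /\ G p.2)].
  have cM' : closed M'.
    apply: closedI => //.
    have -> : [set p : X * A | ~ (N' p.1 /\ G p.2)] =
      ~` ((fst @^-1` N') `&` (snd @^-1` G)) by [].
    apply: open_closedC; apply: openI.
      by move: oN'; apply: (iffLR (continuousP _)); exact: fst_cont.
    by move: oG; apply: (iffLR (continuousP _)); exact: snd_cont.
  have ngM' : ~ good M'.
    move=> gM'; have E := minM M' gM' (@subIsetl _ _ _).
    have : M' (x, a) by rewrite E.
    by move=> [_ []]; split.
  have [x' nx'] : exists x', ~ exists b, M' (x', b) /\ P (x', b).
    apply: contrapT => H; apply: ngM'; split => // y.
    apply: contrapT => Hy; apply: H; by exists y.
  have [b [Mb Pb]] := gM.2 x'.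
  have [N'x' Gb] : N' x' /\ G b.
    by apply: contrapT => H; apply: nx'; exists b; split.
  exists x'; split; last exact: N'N.
  move=> [[y c] [Myc nGc] /= yx']; subst y.
  apply: nx'; exists c; split; last exact: MP.
  by split => // -[_ Gc]; exact: nGc Gc.
have uniq : forall x a a', M (x, a) -> M (x, a') -> a = a'.
  move=> x a a' Ma Ma'; apply: contrapT => /eqP neq.
  have hA' := hA; rewrite open_hausdorff in hA'.
  have [[U U'] /= [aU aU'] [oU oU' /eqP UU']] := hA' a a' neq.
  rewrite inE in aU; rewrite inE in aU'.
  have disj : forall y, OG U y -> OG U' y -> False.
    move=> y Oy Oy'; have [b [Mb _]] := gM.2 y.
    have Ub := i1 _ _ _ Oy Mb; have Ub' := i1 _ _ _ Oy' Mb.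
    have : (U `&` U') b by split.
    by rewrite UU'.
  have c1 := i2 U x a oU Ma aU; have c2 := i2 U' x a' oU' Ma' aU'.
  have ncl : nbhs x (closure (OG U)).
    by apply: open_nbhs_nbhs; split => //; exact: eX (oOG _ oU).
  have [y [Oy' cy]] := c2 _ ncl.
  have [z [Oz Oz']] := cy (OG U') (open_nbhs_nbhs (conj (oOG _ oU') Oy')).
  exact: disj z Oz Oz'.
have exA : forall x, exists a, M (x, a).
  by move=> x; have [a [Ma _]] := gM.2 x; exists a.
pose psi x := projT1 (cid (exA x)).
have Mpsi : forall x, M (x, psi x) := fun x => projT2 (cid (exA x)).
exists psi; split.
  apply/continuous_closedP => K cK.
  have -> : psi @^-1` K = fst @` (M `&` [set p | K p.2]).
    rewrite predeqE => x; split.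
      by move=> Kx; exists (x, psi x) => //; split => //; exact: Mpsi.
    move=> [[y b] [Mb Kb] /= <-].
    by rewrite /preimage /= (uniq _ _ _ (Mpsi y) Mb).
  apply: fst_closed => //; apply: closedI => //.
  have -> : [set p : X * A | K p.2] = snd @^-1` K by [].
  by apply: preimage_closed' => //; exact: snd_cont.
apply/funext => x /=; exact: esym (MP _ (Mpsi x)).
Qed.

End Gleason.

Section Sat.
Variable Om : tsig.

Lemma sat_prod (I : Type) (A : I -> topAlg Om) (e : stonean_pseudoid Om) :
  (forall i, satisfies (A i) e) -> satisfies (prodAlg A) e.
Proof.
move=> sA phi cphi h ch hh hphi; apply: functional_extensionality_dep => i.
apply: (sA i (fun x => phi x i) _ (fun z => h z i)).
- move=> x; apply: (@continuous_comp _ (prod_topology A) _ phi (fun f => f i)).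
    exact: cphi.
  exact: proj_cont.
- move=> z; apply: (@continuous_comp _ (prod_topology A) _ h (fun f => f i)).
    exact: ch.
  exact: proj_cont.
- by move=> n w a /=; rewrite hh.
- by apply/funext => x /=; rewrite -hphi.
Qed.

Lemma sat_sub (A : topAlg Om) (S : set A) (HS : op_closed S) e :
  satisfies A e -> satisfies (subAlg HS) e.
Proof.
move=> sA phi cphi h ch hh hphi; apply: val_inj.
apply: (sA (set_val \o phi) _ (set_val \o h)).
- move=> x; apply: continuous_comp; [exact: cphi | exact: initial_continuous].
- move=> z; apply: continuous_comp; [exact: ch | exact: initial_continuous].
- by move=> n w a /=; rewrite hh.
- by rewrite -hphi.
Qed.

Lemma sat_image (A B : topAlg Om) (f : A -> B) e :
  is_stone A -> is_stone B -> continuous f -> is_hom f ->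
  (forall b, exists a, f a = b) -> satisfies A e -> satisfies B e.
Proof.
move=> sA' sB cf hf sf sA phi cphi h ch hh hphi.
have [[cA hA _] _] := sA'; have [[cB hB _] _] := sB.
have [psi [cpsi fpsi]] := gleason_lift (pi_space_stonean e) cA hA hB cf sf cphi.
have [_ _ _ univ] := pi_freeP e.
have [h' [[ch' hh' h'psi] _]] := univ A psi sA' cpsi.
have [g [_ gu]] := univ B phi sB cphi.
have E1 : g = h by apply: gu.
have E2 : g = f \o h'.
  apply: gu; split.
  - by move=> z; apply: continuous_comp; [exact: ch' | exact: cf].
  - by move=> n w a /=; rewrite hh' hf.
  - by rewrite -compA h'psi.
have := sA psi cpsi h' ch' hh' h'psi.
by rewrite -E1 E2 /= => ->.
Qed.
End Sat.

Lemma backward (Om : tsig) (V : topAlg Om -> Prop)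
  (Sigma : stonean_pseudoid Om -> Prop) :
  (forall A : topAlg Om,
     V A <-> (is_stone A /\ forall e, Sigma e -> satisfies A e)) ->
  stone_variety V.
Proof.
move=> HV; split.
- by move=> A /HV [].
- exists (prodAlg (fun v : void => match v with end)); apply/HV; split.
    by apply: prodAlg_stone => -[].
  by move=> e _; apply: sat_prod => -[].
- move=> A B f /HV [sA satA] sB cf hf sf; apply/HV; split => // e Se.
  exact: sat_image sA sB cf hf sf (satA e Se).
- move=> A S HS /HV [sA satA] cS; apply/HV; split.
    exact: subAlg_stone.
  by move=> e Se; apply: sat_sub; exact: satA.
- move=> I A VA; apply/HV; split.
    by apply: prodAlg_stone => i; have /HV [] := VA i.
  by move=> e Se; apply: sat_prod => i; have /HV [_ ] := VA i; apply.
Qed.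

Definition ultP (T : Type) (F : set_system T) : Prop :=
  [/\ (forall P Q, F (P `&` Q) <-> F P /\ F Q), ~ F set0, F setT &
      forall P, F P \/ F (~` P)].

Definition UT (T : Type) := {F : set_system T | ultP F}.

HB.instance Definition _ (T : Type) := gen_eqMixin (UT T).
HB.instance Definition _ (T : Type) := gen_choiceMixin (UT T).

Definition ubase (T : Type) (P : set T) : set (UT T) := [set F | sval F P].

Lemma ubase_cover (T : Type) : \bigcup_(i in [set: set T]) ubase i = setT.
Proof.
rewrite predeqE => F; split => // _; exists setT => //.
by case: F => F [].
Qed.

Lemma ubaseI (T : Type) (P Q : set T) : ubase (P `&` Q) = ubase P `&` ubase Q.
Proof.
rewrite predeqE => -[F [HI _ _ _]] /=; exact: HI.
Qed.

Lemma ubase_join (T : Type) (i j : set T) (t : UT T) :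
  [set: set T] i -> [set: set T] j -> ubase i t -> ubase j t ->
  exists k, [/\ [set: set T] k, ubase k t & ubase k `<=` ubase i `&` ubase j].
Proof.
move=> _ _ it jt; exists (i `&` j); split => //.
  by rewrite ubaseI.
by rewrite ubaseI.
Qed.

HB.instance Definition _ (T : Type) :=
  isBaseTopological.Build (UT T) (@ubase_cover T) (@ubase_join T).

Section UltSpace.
Variable T : Type.

Lemma ult_open (U : set (UT T)) :
  open U <-> exists D : set (set T), U = \bigcup_(i in D) ubase i.
Proof.
split.
  by move=> [D _ <-]; exists D.
by move=> [D ->]; exists D.
Qed.

Lemma ubase_open (P : set T) : open (ubase P).
Proof. by apply/ult_open; exists [set P]; rewrite bigcup_set1. Qed.

Lemma ubaseC (P : set T) : ubase (~` P) = ~` ubase P.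
Proof.
rewrite predeqE => -[F [HI H0 HT HC]] /=; split.
  move=> nP Pf; apply: H0; have := (HI P (~` P)).2 (conj Pf nP).
  by rewrite setICr.
by move=> nP; case: (HC P).
Qed.

Lemma ubase_clopen (P : set T) : clopen (ubase P).
Proof.
split; first exact: ubase_open.
by rewrite -openC -ubaseC; exact: ubase_open.
Qed.

Lemma ult_nbhsP (F : UT T) (N : set (UT T)) :
  nbhs F N <-> exists P, sval F P /\ ubase P `<=` N.
Proof.
split.
  rewrite nbhsE => -[U [oU UF] UN].
  have [D DU] := (ult_open U).1 oU.
  by move: UF; rewrite DU => -[P DP FP]; exists P; split => // G GP; apply: UN; rewrite DU; exists P.
move=> [P [FP PN]]; apply: (filterS PN); apply: open_nbhs_nbhs; split => //.
exact: ubase_open.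
Qed.

Lemma ultP_filterS (F : set_system T) : ultP F ->
  forall P Q, P `<=` Q -> F P -> F Q.
Proof.
move=> [HI _ _ _] P Q PQ FP.
have E : P `&` Q = P by apply/setIidl.
by rewrite -E in FP; have [] := (HI P Q).1 FP.
Qed.

Lemma ultP_proper (F : set_system T) : ultP F -> ProperFilter F.
Proof.
move=> uF; have [HI H0 HT HC] := uF; split => //; split => //.
- by move=> P Q FP FQ; apply/HI.
- exact: ultP_filterS.
Qed.

Lemma ultP_ex (F : set_system T) (P : set T) : ultP F -> F P -> exists x, P x.
Proof.
move=> [_ H0 _ _] FP; apply: contrapT => nP; apply: H0.
by have -> : set0 = P by rewrite predeqE => x; split => // Px; apply: nP; exists x.
Qed.

Lemma ubase0 : ubase (@set0 T) = set0.
Proof.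
rewrite predeqE => -[F uF]; split => //= H.
by have [_ H0 _ _] := uF; exact: H0 H.
Qed.

Lemma ubaseT : ubase (@setT T) = setT.
Proof.
rewrite predeqE => -[F uF]; split => //= _.
by have [] := uF.
Qed.

Lemma ult_compact : compact [set: UT T].
Proof.
rewrite compact_ultra => U UU _.
pose F0 := [set P : set T | U (ubase P)].
have uF0 : ultP F0.
  split.
  - move=> P Q; rewrite /F0 /= ubaseI; split.
      by move=> H; split; apply: filterS H => x [].
    by move=> [] ? ?; apply: filterI.
  - by rewrite /F0 /= ubase0; exact: filter_not_empty.
  - by rewrite /F0 /= ubaseT; exact: filterT.
  - by move=> P; rewrite /F0 /= ubaseC; exact: in_ultra_setVsetC.
exists (exist _ F0 uF0); split => // N /ult_nbhsP [P [F0P PN]].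
exact: filterS PN F0P.
Qed.

Lemma ult_hausdorff : hausdorff_space (UT T).
Proof.
rewrite open_hausdorff => F G FG.
have [P [FP nGP]] : exists P, sval F P /\ ~ sval G P.
  apply: contrapT => H; move/eqP: FG; apply.
  case: F G H => [F uF] [G uG] /= H.
  apply/eq_exist/seteqP; split => P.
    by move=> FP; apply: contrapT => nGP; apply: H; exists P.
  move=> GP; apply: contrapT => nFP.
  have [_ _ _ /(_ P) [//|FnP]] := uF.
  have [HI H0 _ _] := uG; apply: H0.
  have GnP : G (~` P).
    by apply: contrapT => nGnP; apply: H; exists (~` P); split.
  by rewrite -(setICr P); apply/HI.
exists (ubase P, ubase (~` P)) => /=.
  split; rewrite inE //.
  by rewrite ubaseC.
split; [exact: ubase_open | exact: ubase_open |].
by rewrite -ubaseI setICr ubase0.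
Qed.

Definition udelta (a : T) : UT T.
Proof.
exists (principal_filter a); split.
- move=> P Q; split; first by move=> H; split => x /H [].
  by move=> [HP HQ] x xa; split; [exact: HP | exact: HQ].
- by move=> /(_ a erefl).
- by [].
- move=> P; have [Pa|nPa] := pselect (P a); [left|right] => x -> //.
Defined.

Lemma udeltaE (a : T) (P : set T) : sval (udelta a) P <-> P a.
Proof. by split; [move=> /(_ a erefl) | move=> Pa x ->]. Qed.

Lemma ult_extremal (O : set (UT T)) : open O -> open (closure O).
Proof.
move=> oO; pose E := [set a | O (udelta a)].
suff -> : closure O = ubase E by exact: ubase_open.
rewrite predeqE => F; split.
  move=> clF; apply: contrapT => nE.
  have FnE : sval F (~` E) by case: F nE {clF} => F [_ _ _ HC] /= nE; case: (HC E).
  have [G [OG GnE]] := clF _ ((ult_nbhsP _ _).2 (ex_intro _ _ (conj FnE (@subset_refl _ _)))).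
  have := oO; rewrite openE => /(_ G OG) /ult_nbhsP [P [GP PO]].
  have [a [Pa nEa]] : exists a, (P `&` ~` E) a.
    apply: (ultP_ex (svalP G)).
    by have [HI _ _ _] := svalP G; apply/HI.
  by apply: nEa; apply: PO; apply/udeltaE.
move=> FE N /ult_nbhsP [P [FP PN]].
have [a [Pa Ea]] : exists a, (P `&` E) a.
  by apply: (ultP_ex (svalP F)); have [HI _ _ _] := svalP F; apply/HI.
by exists (udelta a); split => //; apply: PN; apply/udeltaE.
Qed.

Lemma ult_stonean : stonean_space (UT T).
Proof.
split; [exact: ult_compact | exact: ult_hausdorff | exact: ult_extremal].
Qed.

End UltSpace.

Section Cover.
Variable A : topologicalType.
Hypothesis sA : stone_space A.

Let cA : compact [set: A]. Proof. by case: sA. Qed.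
Let hA : hausdorff_space A. Proof. by case: sA. Qed.
Let zA : zero_dim A. Proof. by case: sA. Qed.

Lemma ult_lim_ex (F : UT A) : exists a : A, sval F --> a.
Proof.
have PF := ultP_proper (svalP F).
have [a [_ cla]] := cA PF (@filterT _ _ PF).
exists a => N nN; apply: contrapT => nFN.
have [_ _ _ /(_ N) [//|FnN]] := svalP F.
by have [x [nNx Nx]] := cla _ _ FnN nN.
Qed.

Definition ulim (F : UT A) : A := projT1 (cid (ult_lim_ex F)).

Lemma ulimP (F : UT A) : sval F --> ulim F.
Proof. exact: projT2 (cid (ult_lim_ex F)). Qed.

Lemma ulim_closed (F : UT A) (C : set A) : closed C -> sval F C -> C (ulim F).
Proof.
move=> cC FC; apply: cC => N nN; apply: contrapT => nCN.
have FN : sval F N := ulimP nN.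
have [HI H0 _ _] := svalP F; apply: H0.
have -> : set0 = C `&` N.
  by rewrite predeqE => x; split => // -[Cx Nx]; apply: nCN; exists x.
by apply/HI.
Qed.

Lemma ulim_cont : continuous ulim.
Proof.
move=> F N; rewrite nbhsE => -[N' [oN' N'F] N'N].
have [C [cC CF CN']] := zA oN' N'F.
apply/ult_nbhsP; exists C; split.
  exact: ulimP (open_nbhs_nbhs (conj cC.1 CF)).
move=> G GC; apply: N'N; apply: CN'; apply: ulim_closed => //; exact: cC.2.
Qed.

Lemma ulim_surj (a : A) : ulim (udelta a) = a.
Proof.
apply: esym; apply: hA => U V nU nV.
exists a; split; first exact: nbhs_singleton nU.
by have /udeltaE := ulimP nV.
Qed.

End Cover.

Lemma stonean_cover (A : topologicalType) : stone_space A ->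
  exists (X : topologicalType) (p : X -> A),
    [/\ stonean_space X, continuous p & forall a, exists x, p x = a].
Proof.
move=> sA; exists (UT A); exists (ulim sA); split.
- exact: ult_stonean.
- exact: ulim_cont.
- by move=> a; exists (udelta a); exact: ulim_surj.
Qed.

Section Gen.
Variables (Om : tsig) (A : topAlg Om).

Lemma gen_sub_op_closed (G : set A) : op_closed (gen_sub G).
Proof.
move=> n w a Ga S SP; have [HS GS] := SP; apply: HS => k; exact: Ga k S SP.
Qed.

Lemma gen_sub_min (G S : set A) : op_closed S -> G `<=` S -> gen_sub G `<=` S.
Proof. by move=> HS GS x Gx; apply: Gx; split. Qed.

Lemma sub_gen_sub (G : set A) : G `<=` gen_sub G.
Proof. by move=> x Gx S [_ GS]; exact: GS. Qed.

End Gen.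

Lemma hom_unique (Om : tsig) (A : topAlg Om) (X : topologicalType) (F : topAlg Om) (iota : X -> F)
  (h1 h2 : F -> A) :
  closure (gen_sub (range iota)) = setT -> hausdorff_space A ->
  continuous h1 -> continuous h2 -> is_hom h1 -> is_hom h2 ->
  h1 \o iota = h2 \o iota -> h1 = h2.
Proof.
move=> dense hA c1 c2 hh1 hh2 E.
have cE := closed_eq hA c1 c2.
have oE : op_closed [set z | h1 z = h2 z].
  by move=> n w a Ea; rewrite /= hh1 hh2; congr (op A n w); apply/funext => k /=; exact: Ea.
have sub : gen_sub (range iota) `<=` [set z | h1 z = h2 z].
  apply: (gen_sub_min oE) => _ [x _ <-] /=.
  by have := congr1 (fun f => f x) E.
apply/funext => z; apply: cE.
have : closure (gen_sub (range iota)) z by rewrite dense.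
by move=> cz N nN; have [y [Gy Ny]] := cz N nN; exists y; split => //; exact: sub.
Qed.

Lemma closure_op_closed (Om : tsig) (A : topAlg Om) (D : set A) :
  (forall n, continuous (opc A n)) -> op_closed D -> op_closed (closure D).
Proof.
move=> cA HD n w a cla N nN.
have nM : nbhs (a : pow_space A n) [set b | N (op A n w b)].
  have H := cA n (w, a) N nN.
  exact: (@pair_cst_cont (Om n) (pow_space A n) w a _ H).
pose Bx := [set Bs : 'I_n -> set A | forall j, nbhs (a j) (Bs j)].
pose box (Bs : 'I_n -> set A) : set (pow_space A n) :=
  [set b | forall j, (Bs j `&` D) (b j)].
have FF : Filter (filter_from Bx box).
  apply: filter_from_filter.
    by exists (fun _ => setT) => j; exact: filterT.
  move=> B1 B2 h1 h2; exists (fun j => B1 j `&` B2 j).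
    by move=> j; apply: filterI; [exact: h1 | exact: h2].
  by move=> b Hb; split => j; have [[? ?] ?] := Hb j; split.
have PF : ProperFilter (filter_from Bx box).
  apply: filter_from_proper => Bs HB.
  have ex : forall j, exists x, (Bs j `&` D) x.
    by move=> j; have [x [Dx Bx']] := cla j _ (HB j); exists x.
  by have [b Hb] := choice ex; exists b.
have cv : filter_from Bx box --> (a : pow_space A n).
  apply/cvg_sup => j B /initial_nbhsP [Op [oO Oa OB]].
  exists (fun i => if i == j then Op else setT).
    move=> i; case: eqP => [->|_]; last exact: filterT.
    exact: open_nbhs_nbhs.
  by move=> b Hb; apply: OB; have := Hb j; rewrite eqxx => -[].
have [Bs HBs BsM] := cv _ nM.
have Fb : filter_from Bx box (box Bs) by exists Bs.
have [b Hb] := filter_ex Fb.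
exists (op A n w b); split; last exact: BsM.
by apply: HD => j; have [] := Hb j.
Qed.

Section Free.
Variables (Om : tsig) (X : topologicalType).

Inductive term : Type :=
  | tvar of X
  | tapp (n : nat) of Om n & ('I_n -> term).

Fixpoint teval (S : topAlg Om) (phi : X -> S) (t : term) : S :=
  match t with
  | tvar x => phi x
  | tapp n w ts => op S n w (fun k => teval phi (ts k))
  end.

Definition Y := set (set term).

Record fdata := FData {
  fC : set Y;
  fcls : Topological.axioms_ (set_type fC);
  fops : forall n, Om n -> ('I_n -> set_type fC) -> set_type fC;
  fph : X -> set_type fC }.

Definition falg (d : fdata) : topAlg Om :=
  @TopAlg Om (Topological.Pack (fcls d)) (@fops d).

Definition fphi (d : fdata) : X -> falg d := fph d.

Section Construct.
Variables (S : topAlg Om) (phi : X -> S).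
Hypotheses (sS : is_stone S) (cphi : continuous phi).

Let ev := teval phi.
Let R := range ev.
Let HR : op_closed R.
Proof.
move=> n w a Ra.
have ex : forall k, exists t, ev t = a k.
  by move=> k; have [t _ e] := Ra k; exists t.
have [ts Hts] := choice ex.
exists (tapp w ts) => //=; congr (op S n w); exact/funext.
Qed.

Let S' := closure R.
Let HS' : op_closed S' := closure_op_closed sS.2 HR.
Let Z := subAlg HS'.
Let sZ : is_stone Z := subAlg_stone HS' sS (@closed_closure _ R).

Let emb (s : S) : Y := [set Pt : set term | exists U, nbhs s U /\ ev @^-1` U `<=` Pt].

Let emb_inj (s t : S) : S' t -> emb s = emb t -> s = t.
Proof.
move=> St E; have [[_ hS _] _] := sS; apply: hS => U V nU nV.
have : emb s (ev @^-1` U) by exists U; split.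
rewrite E => -[W [nW WU]].
have [r [[tau _ <-] [Wr Vr]]] := St _ (filterI nW nV).
by exists (ev tau); split => //; exact: WU.
Qed.


Let C : set Y := [set emb s | s in S'].
Let W := set_type C.

Let gex (w : W) : exists z : Z, emb (set_val z) = set_val w.
Proof.
have [s Ss e] := set_valP w.
by exists (SigSub (mem_set Ss)).
Qed.

Let g (w : W) : Z := projT1 (cid (gex w)).
Let gP (w : W) : emb (set_val (g w)) = set_val w := projT2 (cid (gex w)).

Let ginv (z : Z) : W :=
  SigSub (mem_set (ex_intro2 _ _ (set_val z) (set_valP z) erefl : C (emb (set_val z)))).

Let g_ginv (z : Z) : g (ginv z) = z.
Proof. by apply: val_inj; apply: emb_inj; [exact: set_valP | rewrite gP]. Qed.

Let ginv_g (w : W) : ginv (g w) = w.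
Proof. by apply: val_inj => /=; rewrite gP. Qed.

Let cls : Topological.axioms_ W := Topological.class (initial_topology g).

Let fo n (w : Om n) (a : 'I_n -> W) : W := ginv (op Z n w (g \o a)).

Let zx (x : X) : Z :=
  SigSub (mem_set (subset_closure (ex_intro2 _ _ (tvar x) I erefl : R (phi x)))).

Let ph (x : X) : W := ginv (zx x).

Definition cdata : fdata := @FData C cls fo ph.

Lemma cdata_g_cont : continuous (g : falg cdata -> Z).
Proof. exact: initial_continuous. Qed.


Lemma cdata_ginv_cont : continuous (ginv : Z -> falg cdata).
Proof.
apply: (@continuous_comp_initial _ _ Z g).
have -> : g \o ginv = id by apply/funext => z /=; exact: g_ginv.
by move=> z; exact: cvg_id.
Qed.

Lemma cdata_stone : is_stone (falg cdata).
Proof.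
have ginj : injective g by exact: can_inj ginv_g.
have [[cZ hZ zZ] cZop] := sZ.
have [_ _ zdZ] := (stone_alt Z).1 (And3 cZ hZ zZ).
split.
  apply/stone_alt; split.
  - apply: (@initial_compact _ Z g).
    have -> : range g = setT.
      by rewrite predeqE => z; split => // _; exists (ginv z) => //; exact: g_ginv.
    exact: cZ.
  - exact: (@initial_hausdorff _ Z g).
  - exact: (@initial_zero_dimensional _ Z g).
move=> n.
change (continuous ((ginv : Z -> falg cdata) \o (opc Z n) \o
  (fun p : Om n * pow_space (falg cdata) n =>
     ((p.1, (g : falg cdata -> Z) \o p.2) : Om n * pow_space Z n)))).
move=> p; apply: continuous_comp.
  by apply: pair_map_cont; apply: pow_map_cont; exact: cdata_g_cont.
apply: continuous_comp; first exact: cZop.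
exact: cdata_ginv_cont.
Qed.

Lemma cdata_ph_cont : continuous (fphi cdata).
Proof.
apply: (@continuous_comp_initial _ _ Z g).
have -> : g \o fphi cdata = zx by apply/funext => x /=; exact: g_ginv.
apply: (@continuous_comp_initial _ _ S (@set_val S S')).
exact: cphi.
Qed.

Lemma cdata_spec : exists k : falg cdata -> S,
  [/\ continuous k, is_hom k & k \o fphi cdata = phi].
Proof.
exists (fun w => set_val (g w)); split.
- move=> w; apply: continuous_comp; first exact: cdata_g_cont.
  exact: initial_continuous.
- by move=> n w a /=; rewrite /fo g_ginv.
- by apply/funext => x /=; rewrite /ph g_ginv.
Qed.

End Construct.

Definition Idx := {d : fdata | is_stone (falg d) /\ continuous (fphi d)}.
Definition Pr : topAlg Om := prodAlg (fun i : Idx => falg (sval i)).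
Definition diag (x : X) : Pr := fun i => fphi (sval i) x.

Lemma Pr_stone : is_stone Pr.
Proof. by apply: prodAlg_stone => i; case: (svalP i). Qed.

Definition F0 : set Pr := closure (gen_sub (range diag)).
Definition HF0 : op_closed F0 :=
  closure_op_closed Pr_stone.2 (@gen_sub_op_closed Om Pr _).
Definition FreeA : topAlg Om := subAlg HF0.

Definition fiota (x : X) : FreeA :=
  SigSub (mem_set (subset_closure
    (@sub_gen_sub Om Pr (range diag) (diag x) (ex_intro2 _ _ x I erefl)))).

Lemma diag_cont : continuous diag.
Proof. by apply: cont_into_prod => i; case: (svalP i). Qed.

Lemma free_is_free : is_free_stone fiota.
Proof.
have sF : is_stone FreeA by apply: subAlg_stone; [exact: Pr_stone | exact: closed_closure].
have cio : continuous fiota.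
  by apply: (@continuous_comp_initial _ _ Pr (@set_val Pr F0)); exact: diag_cont.
have dense : closure (gen_sub (range fiota)) = setT.
  pose T := [set y : Pr | exists z : FreeA, set_val z = y /\ gen_sub (range fiota) z].
  have HT : op_closed T.
    move=> n w a Ta.
    have [zs Hzs] := choice Ta.
    exists (op FreeA n w zs); split.
      by rewrite /=; congr (op Pr n w); apply/funext => k; have [] := Hzs k.
    by apply: gen_sub_op_closed => k; have [] := Hzs k.
  have GT : gen_sub (range diag) `<=` T.
    apply: (gen_sub_min HT) => y [x _ <-].
    exists (fiota x); split => //.
    by apply: sub_gen_sub; exists x.
  rewrite predeqE => z; split => // _ N /initial_nbhsP [Op [oO Oz ON]].
  have [y [Gy Oy]] := set_valP z _ (open_nbhs_nbhs (conj oO Oz)).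
  have [z' [Ez' Gz']] := GT _ Gy.
  by exists z'; split => //; apply: ON; rewrite /preimage /= Ez'.
split => // S phi sS cphi.
pose d := cdata phi sS.
have [k [ck hk kphi]] := cdata_spec phi sS.
pose i : Idx := exist _ d (conj (cdata_stone phi sS) (@cdata_ph_cont _ phi sS cphi)).
exists (fun z : FreeA => k (set_val z i)); split; first split.
- move=> z; apply: (@continuous_comp _ _ _ (fun z : FreeA => set_val z i) k); last exact: ck.
  apply: (@continuous_comp _ Pr _ (@set_val Pr F0) (fun f : Pr => f i)).
    exact: initial_continuous.
  exact: (@proj_cont Idx (fun i : Idx => falg (sval i)) i).
- by move=> n w a /=; rewrite hk.
- by apply/funext => x /=; rewrite -kphi.
move=> h' [ch' hh' h'phi].
have [[_ hS _] _] := sS.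
apply: (hom_unique dense) => //.
- move=> z; apply: (@continuous_comp _ _ _ (fun z : FreeA => set_val z i) k); last exact: ck.
  apply: (@continuous_comp _ Pr _ (@set_val Pr F0) (fun f : Pr => f i)).
    exact: initial_continuous.
  exact: (@proj_cont Idx (fun i : Idx => falg (sval i)) i).
- by move=> n w a /=; rewrite hk.
- by rewrite h'phi; apply/funext => x /=; rewrite -kphi.
Qed.

End Free.

Lemma free_ex (Om : tsig) (X : topologicalType) :
  exists (F : topAlg Om) (iota : X -> F), is_free_stone iota.
Proof. by exists (FreeA Om X); exists (@fiota Om X); exact: free_is_free. Qed.

Section Forward.
Variable Om : tsig.
Hypothesis cover : forall A : topologicalType, stone_space A ->
  exists (X : topologicalType) (p : X -> A),
    [/\ stonean_space X, continuous p & forall a, exists x, p x = a].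
Hypothesis free_ex : forall X : topologicalType,
  exists (F : topAlg Om) (iota : X -> F), is_free_stone iota.

Lemma forward (V : topAlg Om -> Prop) :
  stone_variety V ->
  exists Sigma : stonean_pseudoid Om -> Prop,
     forall A : topAlg Om,
       V A <-> (is_stone A /\ forall e, Sigma e -> satisfies A e).
Proof.
move=> [Vs Vne Vim Vsub Vprod].
exists (fun e => forall B, V B -> satisfies B e) => A; split.
  by move=> VA; split; [exact: Vs | move=> e; apply].
move=> [sA satA].
have [X [p [sX cp sp]]] := cover sA.1.
have [F [iota fr]] := free_ex X.
have [sF ciota _ univ] := fr.
have [h [[ch hh hiota] _]] := univ A p sA cp.
pose Idx := {uv : F * F | h uv.1 <> h uv.2}.
have exB : forall i : Idx, exists B : topAlg Om, V B /\
    exists g : F -> B, [/\ continuous g, is_hom g & g (sval i).1 <> g (sval i).2].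
  move=> [[u v] /= huv].
  pose e := @StoneanPseudoid Om X sX F iota fr u v.
  apply: contrapT => nB; apply: huv.
  apply: (satA e _ p cp h ch hh hiota) => B VB.
  move=> phi cphi g cg hg gphi; apply: contrapT => ng; apply: nB.
  by exists B; split => //; exists g.
pose Bf i := projT1 (cid (exB i)).
have VBf i : V (Bf i) := (projT2 (cid (exB i))).1.
have exg i := (projT2 (cid (exB i))).2.
pose gf i := projT1 (cid (exg i)).
have gfP i : [/\ continuous (gf i), is_hom (gf i) & gf i (sval i).1 <> gf i (sval i).2].
  exact: (projT2 (cid (exg i))).
pose P := prodAlg Bf.
have VP : V P by apply: Vprod.
have sP : is_stone P := Vs _ VP.
pose G : F -> P := fun z i => gf i z.
have cG : continuous G.
  by apply: cont_into_prod => i; have [] := gfP i.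
have hG : is_hom G.
  move=> n w a; apply: functional_extensionality_dep => i /=.
  by have [_ hi _] := gfP i; rewrite /G hi.
have Gh : forall z1 z2, G z1 = G z2 -> h z1 = h z2.
  move=> z1 z2 E; apply: contrapT => ne.
  have [_ _] := gfP (exist _ (z1, z2) ne); apply => /=.
  by have := congr1 (fun f => f (exist _ (z1, z2) ne)) E.
pose S := range G.
have HS : op_closed S.
  move=> n w a Sa.
  have ex : forall k, exists z, G z = a k.
    by move=> k; have [z _ e] := Sa k; exists z.
  have [z Hz] := choice ex.
  exists (op F n w z) => //; rewrite hG; congr (op P n w); exact/funext.
have cS : closed S.
  apply: compact_closed; first by case: sP => -[].
  apply: continuous_compact; first exact: continuous_subspaceT.
  by case: sF => -[].
pose Sub := subAlg HS.
have VSub : V Sub by apply: Vsub.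
have sSub : is_stone Sub := Vs _ VSub.
pose G' : F -> Sub := fun z => SigSub (mem_set (ex_intro2 _ _ z I erefl : S (G z))).
have G'val : forall z, set_val (G' z) = G z by [].
have cG' : continuous G'.
  by apply: (@continuous_comp_initial _ _ P (@set_val P S)).
have exz : forall s : Sub, exists z, G z = set_val s.
  by move=> s; have [z _ e] := set_valP s; exists z.
pose k (s : Sub) : A := h (projT1 (cid (exz s))).
have kP : forall s z, G z = set_val s -> k s = h z.
  by move=> s z E; apply: Gh; rewrite E (projT2 (cid (exz s))).
have hk : is_hom k.
  move=> n w s.
  pose zs j := projT1 (cid (exz (s j))).
  rewrite (kP _ (op F n w zs)); first by rewrite hh.
  rewrite hG; congr (op P n w); apply/funext => j /=.
  exact: (projT2 (cid (exz (s j)))).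
have ck : continuous k.
  apply/continuous_closedP => C cC.
  have -> : k @^-1` C = G' @` (h @^-1` C).
    rewrite predeqE => s; split.
      move=> Cs; exists (projT1 (cid (exz s))) => //.
      by apply: val_inj; exact: (projT2 (cid (exz s))).
    by move=> [z Cz <-]; rewrite /preimage /= (kP _ z).
  apply: compact_closed; first by case: sSub => -[].
  apply: continuous_compact; first exact: continuous_subspaceT.
  apply: subclosed_compact (@subsetT _ _); last by case: sF => -[].
  exact: preimage_closed'.
apply: (Vim Sub A k) => // a.
have [x <-] := sp a.
exists (G' (iota x)); rewrite (kP _ (iota x)) //.
by rewrite -hiota.
Qed.
End Forward.

End Helpers.
Import Helpers.

Theorem theorem5p19 (Om : tsig) (V : topAlg Om -> Prop) :
  (forall A, V A -> is_stone A) ->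
  (stone_variety V <->
   exists Sigma : stonean_pseudoid Om -> Prop,
     forall A : topAlg Om,
       V A <-> (is_stone A /\ forall e, Sigma e -> satisfies A e)).
Proof.
move=> _; split.
  apply: forward.
  - exact: stonean_cover.
  - exact: free_ex.
by move=> [Sigma H]; exact: backward H.
Qed.
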